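(* Let $G$ be a looped simple graph and $k$ a positive integer. Then $G$ has a transverse circuit of size $k$ if and only if some looped simple graph locally equivalent to $G$ has a vertex of degree $k-1$.
   Context: A looped simple graph is a finite graph in which each vertex carries at most one loop and no two distinct vertices are joined by more than one edge. ''Adjacent''/''neighbors'' refer only to distinct vertices joined by a non-loop edge; the degree of $v$ is its number of neighbors (loops not counted). $A(G)$ is the $V(G)\times V(G)$ matrix over $GF(2)$ with diagonal entry $1$ exactly at looped vertices and off-diagonal entry $1$ exactly for adjacent pairs. $IAS(G)=(I\mid A(G)\mid A(G)+I)$ over $GF(2)$, rows indexed by $V(G)$; for $v\in V(G)$ the $v$-columns of the three blocks are labelled $\phi_G(v),\chi_G(v),\psi_G(v)$. The isotropic matroid $M[IAS(G)]$ is the binary column matroid of $IAS(G)$ on $W(G)=\{\phi_G(v),\chi_G(v),\psi_G(v):v\in V(G)\}$. The vertex triple of $v$ is $\tau_G(v)=\{\phi_G(v),\chi_G(v),\psi_G(v)\}$. A subtransversal is a subset of $W(G)$ meeting each vertex triple in at most one element; a transverse circuit of $G$ is a circuit of $M[IAS(G)]$ that is a subtransversal. Local equivalence: $G_\ell^v$ is obtained from $G$ by complementing the loop status of $v$; $G_s^v$ by complementing the adjacency status of every pair of distinct neighbors of $v$; $G_{ns}^v$ by doing this and also complementing the loop status of every neighbor of $v$. $H$ is locally equivalent to $G$ if $H$ is obtained from $G$ by a finite sequence of such operations. *)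

(* Defs.v *)
From HB Require Import structures.
From mathcomp Require Import all_boot all_order all_algebra.
Set Implicit Arguments. Unset Strict Implicit. Unset Printing Implicit Defensive.
Import GRing.Theory.
Local Open Scope ring_scope.

(* A looped simple graph on a finite vertex type V: a set of looped vertices
   and a set of ordered adjacent pairs (required symmetric and irreflexive). *)
Record lgraph (V : finType) := LGraph { loops : {set V}; edges : {set V * V} }.

Definition adj (V : finType) (G : lgraph V) (x y : V) : bool := (x, y) \in edges G.

Definition looped_simple (V : finType) (G : lgraph V) : Prop :=
  (forall x y, adj G x y = adj G y x) /\ (forall x, ~~ adj G x x).

(* degree: number of neighbours, loops not counted *)
Definition degree (V : finType) (G : lgraph V) (v : V) : nat :=
  #|[set w | adj G v w]|.

Definition op_loop (V : finType) (v : V) (G : lgraph V) : lgraph V :=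
  LGraph [set x | (x \in loops G) (+) (x == v)] (edges G).

Definition op_s (V : finType) (v : V) (G : lgraph V) : lgraph V :=
  LGraph (loops G)
    [set p | (p \in edges G) (+) [&& p.1 != p.2, adj G v p.1 & adj G v p.2]].

Definition op_ns (V : finType) (v : V) (G : lgraph V) : lgraph V :=
  LGraph [set x | (x \in loops G) (+) adj G v x] (edges (op_s v G)).

Definition local_step (V : finType) (G H : lgraph V) : Prop :=
  exists v, H = op_loop v G \/ H = op_s v G \/ H = op_ns v G.

Inductive loc_equiv (V : finType) (G : lgraph V) : lgraph V -> Prop :=
  | le_refl : loc_equiv G G
  | le_step : forall H K, loc_equiv G H -> local_step H K -> loc_equiv G K.

(* Labels of the three blocks of IAS(G): phi (I), chi (A), psi (A+I). *)
Inductive lbl := Phi | Chi | Psi.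
Definition lbl2o (l : lbl) : 'I_3 :=
  match l with Phi => inord 0 | Chi => inord 1 | Psi => inord 2 end.
Definition o2lbl (i : 'I_3) : option lbl :=
  match val i with 0 => Some Phi | 1 => Some Chi | 2 => Some Psi | _ => None end%N.
Lemma lbl2oK : pcancel lbl2o o2lbl.
Proof. by case; rewrite /o2lbl /= inordK. Qed.
HB.instance Definition _ := Finite.copy lbl (pcan_type lbl2oK).

(* W(G) = V x {phi,chi,psi}; (v, Phi) is phi_G(v), etc. *)
Definition W (V : finType) := (V * lbl)%type.

Definition Amx (V : finType) (G : lgraph V) (u v : V) : 'F_2 :=
  if u == v then (v \in loops G)%:R else (adj G u v)%:R.

Definition col (V : finType) (G : lgraph V) (w : W V) (u : V) : 'F_2 :=
  match w.2 with
  | Phi => (u == w.1)%:R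
  | Chi => Amx G u w.1
  | Psi => Amx G u w.1 + (u == w.1)%:R
  end.

Definition dependent (V : finType) (G : lgraph V) (S : {set W V}) : Prop :=
  exists c : W V -> 'F_2,
    (forall w, w \notin S -> c w = 0) /\ (exists w, c w != 0) /\
    (forall u, \sum_(w : W V) c w * col G w u = 0).

Definition circuit (V : finType) (G : lgraph V) (C : {set W V}) : Prop :=
  dependent G C /\ forall D : {set W V}, D \proper C -> ~ dependent G D.

Definition vtriple (V : finType) (v : V) : {set W V} := [set (v, l) | l : lbl].

Definition subtransversal (V : finType) (S : {set W V}) : Prop :=
  forall v : V, (#|S :&: vtriple v| <= 1)%N.

Definition transverse_circuit (V : finType) (G : lgraph V) (C : {set W V}) : Prop :=
  circuit G C /\ subtransversal C.

(* Main.v *)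
Require Import Defs.
From mathcomp Require Import all_boot all_order all_algebra.
Set Implicit Arguments. Unset Strict Implicit. Unset Printing Implicit Defensive.
Import GRing.Theory.
Local Open Scope ring_scope.

Lemma F2_cases (x : 'F_2) : x = 0 \/ x = 1.
Proof. case: x => [[|[|n]] Hn]; [left|right|]; try by apply: val_inj. by []. Qed.
Lemma F2_add_self (x : 'F_2) : x + x = 0.
Proof. case: (F2_cases x) => ->; [by rewrite addr0 | exact: val_inj]. Qed.

Definition colrel (V : finType) (G G' : lgraph V) (s : W V -> W V) (v : V) (a : V -> 'F_2) :=
  forall w u, Defs.col G' (s w) u = Defs.col G w u + a u * Defs.col G w v.

Definition B (b : bool) : 'F_2 := b%:R.
Lemma B_add a b : B a + B b = B (a (+) b).
Proof. by case: a; case: b => //=; rewrite /B ?addr0 ?add0r // F2_add_self. Qed.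
Lemma B_mul a b : B a * B b = B (a && b).
Proof. by case: a; case: b; rewrite /B /= ?mulr1 ?mul1r ?mulr0 ?mul0r. Qed.

Lemma col_B (V : finType) (G : lgraph V) (w : W V) u :
  Defs.col G w u = B (match w.2 with
    | Phi => u == w.1
    | Chi => if u == w.1 then w.1 \in loops G else adj G u w.1
    | Psi => (if u == w.1 then w.1 \in loops G else adj G u w.1) (+) (u == w.1) end).
Proof.
case: w => x [] /=; rewrite /Defs.col /Amx /=; case: (u == x) => //;
  by rewrite -B_add.
Qed.

Definition sCP l := match l with Phi => Phi | Chi => Psi | Psi => Chi end.
Definition sFP l := match l with Phi => Psi | Chi => Chi | Psi => Phi end.
Definition sFC l := match l with Phi => Chi | Chi => Phi | Psi => Psi end.
Definition sigf (V : finType) (f : V -> lbl -> lbl) (w : W V) : W V := (w.1, f w.1 w.2).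
Lemma sigfK (V : finType) (f : V -> lbl -> lbl) :
  (forall x, involutive (f x)) -> involutive (sigf f).
Proof. by move=> fK [x l]; rewrite /sigf /= fK. Qed.
Lemma sigf1 (V : finType) (f : V -> lbl -> lbl) w : (sigf f w).1 = w.1.
Proof. by []. Qed.

Definition fns (V : finType) (G : lgraph V) v (x : V) :=
  if x == v then (if v \in loops G then sFC else sFP) else id.
Definition fs (V : finType) (G : lgraph V) v (x : V) :=
  if x == v then (if v \in loops G then sFC else sFP)
  else if adj G v x then sCP else id.
Definition floop (V : finType) (v x : V) := if x == v then sCP else id.

Lemma fnsK (V : finType) (G : lgraph V) v x : involutive (fns G v x).
Proof. by rewrite /fns; case: (x == v); case: (v \in loops G) => // [] []. Qed.
Lemma fsK (V : finType) (G : lgraph V) v x : involutive (fs G v x).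
Proof. by rewrite /fs; case: (x == v); case: (v \in loops G); case: (adj G v x) => // [] []. Qed.
Lemma floopK (V : finType) (v x : V) : involutive (floop v x).
Proof. by rewrite /floop; case: (x == v) => // [] []. Qed.

Lemma colrel_loop (V : finType) (G : lgraph V) v :
  colrel G (op_loop v G) (sigf (floop v)) v (fun _ => 0).
Proof.
move=> [x l] u; rewrite mul0r addr0 !col_B /sigf /floop /=; congr B.
rewrite /adj /= inE; case: (eqVneq x v) => [->|ne]; case: l => //=;
  rewrite ?eqxx ?(negbTE ne) ?addbT ?addbF //; case: (u == v) => //=; by rewrite ?addbT ?addbF ?negbK.
Qed.

Lemma colrel_ns (V : finType) (G : lgraph V) v : looped_simple G ->
  colrel G (op_ns v G) (sigf (fns G v)) v (fun u => B (adj G v u)).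
Proof.
move=> [sym irr] [x l] u; rewrite !col_B B_mul B_add /sigf /fns /=; congr B.
have irr' := negbTE (irr v).
rewrite /adj /= !inE -!/(adj G _ _) /=.
case: (eqVneq x v) => [->|nxv]; case: (eqVneq u v) => [->|nuv].
all: rewrite ?eqxx ?irr' /=; try rewrite (sym u v).
all: case: l => /=.
all: try (case: (v \in loops G)) => /=.
all: rewrite ?(eq_sym v x) ?(negbTE nxv) /=.
all: try (case: (eqVneq u x) => [->|nux]; rewrite ?eqxx ?(negbTE nux) /=).
all: repeat (match goal with |- context[adj ?g ?p ?q] => case: (adj g p q)
   | |- context [?p \in loops ?g] => case: (p \in loops g) end).
all: try by []. all: by case: (x \in loops G).
Qed.

Lemma colrel_s (V : finType) (G : lgraph V) v : looped_simple G ->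
  colrel G (op_s v G) (sigf (fs G v)) v (fun u => B (adj G v u)).
Proof.
move=> [sym irr] [x l] u; rewrite !col_B B_mul B_add /sigf /fs /=; congr B.
have irr' := negbTE (irr v).
rewrite /adj /= !inE -!/(adj G _ _) /=.
case: (eqVneq x v) => [->|nxv]; case: (eqVneq u v) => [->|nuv].
all: rewrite ?eqxx ?irr' /=; try rewrite (sym u v).
all: try (case: (v \in loops G)) => /=.
all: rewrite ?(eq_sym v x) ?(negbTE nxv) /=.
all: try (case: (eqVneq u x) => [->|nux]; rewrite ?eqxx ?(negbTE nux) /=).
all: repeat (match goal with |- context[adj ?g ?p ?q] => case: (adj g p q)
   | |- context [?p \in loops ?g] => case: (p \in loops g) end).
all: case: l => /=.
all: try by []. all: by case: (x \in loops G).
Qed.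

Lemma dep_fwd (V : finType) (G G' : lgraph V) s v a :
  involutive s -> a v = 0 -> colrel G G' s v a ->
  forall S, dependent G S -> dependent G' (s @: S).
Proof.
move=> sK av cr S [c [c0 [[w0 cw0] cs]]].
have sI : injective s := inv_inj sK.
exists (fun w => c (s w)); split; [|split].
- move=> w; apply: contraNeq => H; rewrite -(sK w); apply: imset_f.
  by apply: contraTT H => /c0 ->.
- by exists (s w0); rewrite sK.
- move=> u; rewrite (reindex_inj sI) /=.
  under eq_bigr => w _ do rewrite sK cr mulrDr mulrCA.
  by rewrite big_split /= cs -mulr_sumr cs mulr0 addr0.
Qed.

Lemma colrel_sym (V : finType) (G G' : lgraph V) s v a :
  involutive s -> a v = 0 -> colrel G G' s v a -> colrel G' G s v a.
Proof.
move=> sK av cr w u.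
have := cr (s w) u; rewrite sK => ->.
have := cr (s w) v; rewrite sK av mul0r addr0 => <-.
by rewrite -addrA F2_add_self addr0.
Qed.

Lemma imsetK_inv (V : finType) (s : W V -> W V) (A : {set W V}) :
  involutive s -> s @: (s @: A) = A.
Proof.
move=> sK; rewrite -imset_comp (eq_imset _ (g := id)) ?imset_id //.
Qed.

Lemma mem_inv (V : finType) (s : W V -> W V) (sK : involutive s) (A : {set W V}) w :
  (w \in s @: A) = (s w \in A).
Proof. by rewrite -{1}(sK w) mem_imset //; apply: inv_inj. Qed.

Lemma in_vtriple (V : finType) (v : V) w : (w \in vtriple v) = (w.1 == v).
Proof.
apply/imsetP/eqP => [[l _ ->] //|<-]; exists w.2 => //; by case: w.
Qed.

Lemma circ_fwd (V : finType) (G G' : lgraph V) s v a :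
  involutive s -> a v = 0 -> colrel G G' s v a ->
  forall C, circuit G C -> circuit G' (s @: C).
Proof.
move=> sK av cr C [dC mC]; split; first exact: (dep_fwd sK av cr dC).
move=> D pD dD.
have H1 : s @: D \proper C.
  have := @imset_proper _ _ s _ _ (in2W (inv_inj sK)) pD.
  by rewrite imsetK_inv.
exact: (mC _ H1 (dep_fwd sK av (colrel_sym sK av cr) dD)).
Qed.

Definition has_tc (V : finType) (G : lgraph V) k :=
  exists C : {set W V}, transverse_circuit G C /\ #|C| = k.

Lemma tc_fwd (V : finType) (G G' : lgraph V) s v a :
  involutive s -> (forall w, (s w).1 = w.1) -> a v = 0 -> colrel G G' s v a ->
  forall k, has_tc G k -> has_tc G' k.
Proof.
move=> sK s1 av cr k [C [[cC tC] <-]]; exists (s @: C); split; last first.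
  by rewrite card_imset //; apply: inv_inj.
split; first exact: (circ_fwd sK av cr cC).
move=> x; apply: leq_trans (tC x); apply: eq_leq.
have -> : s @: C :&: vtriple x = s @: (C :&: vtriple x).
  apply/setP => w; rewrite !(mem_inv sK) !inE !in_vtriple s1 //. by rewrite (mem_inv sK).
by rewrite (card_imset _ (inv_inj sK)).
Qed.

Lemma tc_iff (V : finType) (G G' : lgraph V) s v a :
  involutive s -> (forall w, (s w).1 = w.1) -> a v = 0 -> colrel G G' s v a ->
  forall k, has_tc G k <-> has_tc G' k.
Proof.
move=> sK s1 av cr k; split; first exact: (tc_fwd sK s1 av cr).
exact: (tc_fwd sK s1 av (colrel_sym sK av cr)).
Qed.

Lemma tc_set (V : finType) (G G' : lgraph V) s v a :
  involutive s -> (forall w, (s w).1 = w.1) -> a v = 0 -> colrel G G' s v a ->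
  forall C, transverse_circuit G C -> transverse_circuit G' (s @: C) /\ #|s @: C| = #|C|.
Proof.
move=> sK s1 av cr C [cC tC]; split; last by rewrite (card_imset _ (inv_inj sK)).
split; first exact: (circ_fwd sK av cr cC).
move=> x; apply: leq_trans (tC x); apply: eq_leq.
have -> : s @: C :&: vtriple x = s @: (C :&: vtriple x).
  apply/setP => w; rewrite !(mem_inv sK) !inE !in_vtriple s1 //. by rewrite (mem_inv sK).
by rewrite (card_imset _ (inv_inj sK)).
Qed.

Lemma ls_loop (V : finType) (G : lgraph V) v : looped_simple G -> looped_simple (op_loop v G).
Proof. by []. Qed.

Lemma ls_s (V : finType) (G : lgraph V) v : looped_simple G -> looped_simple (op_s v G).
Proof.
move=> [sym irr]; split => [x y|x]; rewrite /adj /= !inE -!/(adj G _ _) /=.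
  rewrite (sym x y) (eq_sym x y).
  by case: (y != x); case: (adj G v x); case: (adj G v y).
by rewrite eqxx /= (negbTE (irr x)).
Qed.

Lemma ls_ns (V : finType) (G : lgraph V) v : looped_simple G -> looped_simple (op_ns v G).
Proof. exact: ls_s. Qed.

Lemma step_tc (V : finType) (G H : lgraph V) : looped_simple G -> local_step G H ->
  looped_simple H /\ (forall k, has_tc G k <-> has_tc H k).
Proof.
move=> lsG [v [->|[->|->]]].
- split; first exact: ls_loop.
  apply: (tc_iff (sigfK (floopK v)) (@sigf1 _ _) _ (colrel_loop G v)) => //.
- split; first exact: ls_s.
  apply: (tc_iff (sigfK (fsK G v)) (@sigf1 _ _) _ (colrel_s v lsG)).
  by rewrite /B (negbTE (lsG.2 v)).
- split; first exact: ls_ns.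
  apply: (tc_iff (sigfK (fnsK G v)) (@sigf1 _ _) _ (colrel_ns v lsG)).
  by rewrite /B (negbTE (lsG.2 v)).
Qed.

Lemma loc_tc (V : finType) (G H : lgraph V) : looped_simple G -> loc_equiv G H ->
  looped_simple H /\ (forall k, has_tc G k <-> has_tc H k).
Proof.
move=> lsG; elim => [|K L _ [lsK IH] st]; first by [].
have [lsL IH2] := step_tc lsK st; split => // k.
exact: (iff_trans (IH k) (IH2 k)).
Qed.

Lemma B1 : B true = 1. Proof. by []. Qed.
Lemma B0 : B false = 0. Proof. by []. Qed.

Lemma sum_phi (V : finType) (G : lgraph V) (c : W V -> 'F_2) u :
  (forall w, w.2 != Phi -> c w = 0) ->
  \sum_(w : W V) c w * Defs.col G w u = c (u, Phi).
Proof.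
move=> cP; rewrite (bigD1 (u, Phi)) //= col_B /= eqxx mulr1 big1 ?addr0 //.
move=> [y l] /= ne; case: (eqVneq l Phi) => [El|nl]; last by rewrite cP ?mul0r.
rewrite col_B El /=; case: (eqVneq u y) => [Eu|]; last by rewrite mulr0.
by move: ne; rewrite Eu El eqxx.
Qed.

Lemma phi_zero (V : finType) (G : lgraph V) (c : W V -> 'F_2) :
  (forall w, w.2 != Phi -> c w = 0) ->
  (forall u, \sum_(w : W V) c w * Defs.col G w u = 0) -> forall w, c w = 0.
Proof.
move=> cP cs [y l]; case: (eqVneq l Phi) => [->|nl]; last exact: cP.
by rewrite -(sum_phi G y cP) cs.
Qed.

Lemma sum1 (V : finType) (G : lgraph V) (c : W V -> 'F_2) x0 u :
  x0.2 != Phi -> (forall w, w != x0 -> w.2 != Phi -> c w = 0) ->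
  \sum_(w : W V) c w * Defs.col G w u = c x0 * Defs.col G x0 u + c (u, Phi).
Proof.
move=> x0P cP; rewrite (bigD1 x0) //=; congr (_ + _).
pose c' w := if w == x0 then 0 else c w.
have -> : c (u, Phi) = c' (u, Phi).
  rewrite /c'; case: eqP => // E; by move: x0P; rewrite -E eqxx.
rewrite -(sum_phi G u (c := c')); last first.
  by move=> w wP; rewrite /c'; case: eqP => // /eqP ne; apply: cP.
rewrite [RHS](bigD1 x0) //= /c' eqxx mul0r add0r.
by apply: eq_bigr => w /negbTE ->.
Qed.

Definition nbr (V : finType) (G : lgraph V) v := [set y | adj G v y].
Definition Nc (V : finType) (G : lgraph V) v l : {set W V} :=
  (v, l) |: [set (y, Phi) | y in nbr G v].

Lemma bad_col (V : finType) (G : lgraph V) v l u : looped_simple G -> l != Phi ->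
  Defs.col G (v, l) v = 0 -> Defs.col G (v, l) u = B (adj G v u).
Proof.
move=> [sym irr] nl; rewrite !col_B /= eqxx; case: (eqVneq u v) => [->|nuv].
  rewrite (negbTE (irr v)); case: l nl => //= _; case: (v \in loops G) => //.
by case: l nl => //= _ _; rewrite ?addbF sym.
Qed.

Lemma Nc_dep (V : finType) (G : lgraph V) v l : looped_simple G -> l != Phi ->
  Defs.col G (v, l) v = 0 -> dependent G (Nc G v l).
Proof.
move=> lsG nl bad; exists (fun w => B (w \in Nc G v l)); split; [|split].
- by move=> w /negbTE ->.
- by exists (v, l); rewrite setU11.
- move=> u; rewrite (@sum1 _ G _ (v, l) u) //; last first.
    move=> w ne wP; rewrite /Nc !inE (negbTE ne) /=.
    case: imsetP => [[y _ Ew]|//]; by move: wP; rewrite Ew eqxx.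
  rewrite {1}/Nc setU11 B1 mul1r (bad_col _ lsG nl bad) /Nc !inE.
  have -> : ((u, Phi) \in [set (y, Phi) | y in nbr G v]) = adj G v u.
    apply/imsetP/idP => [[y]|au]; last by exists u; rewrite ?inE.
    by rewrite inE => ay [->].
  have -> : ((u, Phi) == (v, l)) = false.
    by apply/eqP => -[_ E]; move: nl; rewrite E eqxx.
  by rewrite /= F2_add_self.
Qed.

Lemma Nc_circuit (V : finType) (G : lgraph V) v l : looped_simple G -> l != Phi ->
  Defs.col G (v, l) v = 0 -> circuit G (Nc G v l).
Proof.
move=> lsG nl bad; split; first exact: Nc_dep.
move=> D /properP [sDN [x xN xD]] [c [c0 [[w0 cw0] cs]]].
have cvl : c (v, l) = 0.
  case: (eqVneq x (v, l)) => [Ex|nx]; first by rewrite -Ex; apply: c0.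
  move: xN; rewrite /Nc !inE (negbTE nx) /=.
  case/imsetP => y; rewrite inE => ay Ex.
  have := cs y; rewrite (@sum1 _ G _ (v, l) y) //; last first.
    move=> w ne wP; apply: c0; apply: contra wP => wD.
    move/subsetP: sDN => /(_ w wD); rewrite /Nc !inE (negbTE ne) /=.
    by case/imsetP => z _ ->.
  rewrite (bad_col _ lsG nl bad) (c0 (y, Phi)) -?Ex // addr0.
  by rewrite /B ay mulr1.
move: cw0; rewrite (@phi_zero _ G c) ?eqxx //.
move=> w wP; case: (eqVneq w (v, l)) => [->//|ne]; apply: c0; apply: contra wP => wD.
move/subsetP: sDN => /(_ w wD); rewrite /Nc !inE (negbTE ne) /=.
by case/imsetP => z _ ->.
Qed.

Lemma Nc_card (V : finType) (G : lgraph V) v l : l != Phi ->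
  #|Nc G v l| = (degree G v).+1.
Proof.
move=> nl; rewrite /Nc cardsU1 (card_imset _ (fun a b (E : (a, Phi) = (b, Phi)) => congr1 fst E)).
have -> : (v, l) \in [set (y, Phi) | y in nbr G v] = false.
  by apply/imsetP => -[y _ [_ E]]; move: nl; rewrite E eqxx.
by rewrite /degree /nbr.
Qed.

Lemma Nc_trans (V : finType) (G : lgraph V) v l : looped_simple G ->
  subtransversal (Nc G v l).
Proof.
move=> lsG x; rewrite -(cards1 (x, if x == v then l else Phi)).
apply: subset_leq_card; apply/subsetP => w; rewrite !inE in_vtriple.
case/andP => /orP [/eqP ->|/imsetP [y]] /=.
  by move=> /eqP <-; rewrite eqxx.
rewrite inE => ay -> /= /eqP <-.
case: (eqVneq y v) => [E|_]; last by rewrite eqxx.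
by move: ay; rewrite E (negbTE (lsG.2 v)).
Qed.

Lemma backward (V : finType) (H : lgraph V) v k : looped_simple H -> (0 < k)%N ->
  degree H v = k.-1 -> has_tc H k.
Proof.
move=> lsH k0 dv; set l := if v \in loops H then Psi else Chi.
have nl : l != Phi by rewrite /l; case: (v \in loops H); apply/eqP.
have bad : Defs.col H (v, l) v = 0.
  rewrite col_B /l /=; case: (v \in loops H) => /=; rewrite eqxx //.
exists (Nc H v l); split; first split.
- exact: Nc_circuit.
- exact: Nc_trans.
by rewrite Nc_card // dv prednK.
Qed.

Definition cnt (V : finType) (C : {set W V}) := #|[set w in C | w.2 != Phi]|.

Lemma cnt_lt (V : finType) (s : W V -> W V) (sK : involutive s) (C : {set W V}) w0 :
  (forall w, w \in C -> (s w).2 != Phi -> w.2 != Phi) ->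
  w0 \in C -> w0.2 != Phi -> (s w0).2 = Phi -> (cnt (s @: C) < cnt C)%N.
Proof.
move=> H w0C w0P sw0; rewrite /cnt.
have -> : [set w in s @: C | w.2 != Phi] = s @: [set w in C | (s w).2 != Phi].
  by apply/setP => w; rewrite (mem_inv sK) !inE sK (mem_inv sK).
rewrite (card_imset (f := s) _ (inv_inj sK)). apply: proper_card; apply/properP; split.
  by apply/subsetP => w; rewrite !inE => /andP [wC swP]; rewrite wC (H w wC swP).
by exists w0; rewrite !inE ?w0C ?w0P ?sw0 ?eqxx.
Qed.

Lemma tr_uniq (V : finType) (C : {set W V}) w1 w2 : subtransversal C ->
  w1 \in C -> w2 \in C -> w1.1 = w2.1 -> w1 = w2.
Proof.
move=> tC w1C w2C E; have := tC w1.1.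
move/card_le1_eqP; apply; rewrite !inE ?w1C ?w2C !in_vtriple ?E eqxx //.
Qed.

Lemma circ_sub (V : finType) (G : lgraph V) C D : circuit G C -> dependent G D ->
  D \subset C -> D = C.
Proof.
move=> [_ mC] dD sDC; apply/eqP; rewrite eqEproper sDC /=; apply/negP => pDC.
exact: (mC D pDC dD).
Qed.

Lemma cnt_pos (V : finType) (G : lgraph V) C : dependent G C -> (0 < cnt C)%N.
Proof.
move=> [c [c0 [[w0 cw0] cs]]]; rewrite /cnt card_gt0; apply/negP => /eqP E.
move: cw0; rewrite (@phi_zero _ G c) ?eqxx // => w wP.
apply: c0; apply/negP => wC.
have : w \in [set w in C | w.2 != Phi] by rewrite inE wC wP.
by rewrite E inE.
Qed.

Lemma B_eq1 b : B b = 1 -> b.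
Proof. by case: b => // /eqP. Qed.
Lemma B_eq0 b : B b = 0 -> ~~ b.
Proof. by case: b => // /eqP. Qed.

Lemma stepA (V : finType) (G : lgraph V) C v l : looped_simple G -> transverse_circuit G C ->
  (v, l) \in C -> l != Phi -> Defs.col G (v, l) v = 1 ->
  transverse_circuit (op_ns v G) (sigf (fns G v) @: C) /\
  #|sigf (fns G v) @: C| = #|C| /\ (cnt (sigf (fns G v) @: C) < cnt C)%N.
Proof.
move=> lsG tC vlC nl good.
have sK := sigfK (fnsK G v).
have av : B (adj G v v) = 0 by rewrite /B (negbTE (lsG.2 v)).
have [tc' cd] := tc_set sK (@sigf1 _ _) av (colrel_ns v lsG) tC.
split => //; split => //.
apply: (cnt_lt sK _ vlC nl).
- move=> w wC; rewrite /sigf /fns /=; case: (eqVneq w.1 v) => [E|//].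
  by rewrite (tr_uniq tC.2 wC vlC E).
- move: good; rewrite /sigf /fns /= eqxx col_B /= eqxx.
  case: l nl vlC => [/eqP //|_ _|_ _]; case E: (v \in loops G) => //= /B_eq1.
Qed.

Lemma forward (V : finType) (G0 : lgraph V) : looped_simple G0 ->
  forall n (G : lgraph V) C, (cnt C <= n)%N -> looped_simple G -> loc_equiv G0 G ->
  transverse_circuit G C ->
  exists H, looped_simple H /\ loc_equiv G0 H /\ exists v, degree H v = #|C|.-1.
Proof.
move=> ls0; elim=> [|n IH] G C cn lsG eG tC.
  by have := cnt_pos tC.1.1; rewrite leqn0 in cn; rewrite (eqP cn).
case: (boolP [exists w, (w \in C) && (w.2 != Phi) && (Defs.col G w w.1 == 1)]) =>
  [/existsP [[v l] /andP [/andP [vlC nl] /eqP good]] | noA].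
  have [tc' [cd cl]] := stepA lsG tC vlC nl good.
  have st : local_step G (op_ns v G) by exists v; right; right.
  have cn' : (cnt (sigf (fns G v) @: C) <= n)%N by rewrite -ltnS (leq_trans cl cn).
  have [H [lsH [eH dH]]] := IH _ _ cn' (ls_ns v lsG) (le_step eG st) tc'.
  by exists H; rewrite -cd.
have allbad : forall w, w \in C -> w.2 != Phi -> Defs.col G w w.1 = 0.
  move=> w wC wP; case: (F2_cases (Defs.col G w w.1)) => // E1.
  by move/existsPn: noA => /(_ w); rewrite wC wP E1 eqxx.
have := cnt_pos tC.1.1.
rewrite card_gt0 => /set0Pn [[v l]]; rewrite inE => /andP [vlC nl].
have bad := allbad _ vlC nl.
case: (boolP [exists y, adj G v y && ((y, Phi) \notin C)]) => [/existsP [y /andP [ay yC]] | noB].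
  rewrite /= in nl bad.
  pose s1 := sigf (fns G y).
  have sK1 : involutive s1 := sigfK (fnsK G y).
  have ay0 : B (adj G y y) = 0 by rewrite /B (negbTE (lsG.2 y)).
  have fix1 : s1 @: C = C.
    rewrite -[RHS]imset_id; apply: eq_in_imset => -[x l'] xC.
    rewrite /s1 /sigf /fns /=; case: (eqVneq x y) => [E|//]; subst x.
    have wP : l' != Phi by apply: contraNneq yC => E2; rewrite -E2.
    have := allbad _ xC wP; rewrite col_B /= eqxx.
    case: l' wP {xC} => [/eqP //|_|_]; case: (y \in loops G) => //= /B_eq0 //.
  have [tc1 _] := tc_set sK1 (@sigf1 _ _) ay0 (colrel_ns y lsG) tC.
  rewrite fix1 in tc1.
  have vy : v != y by apply: contraTneq ay => ->; rewrite (negbTE (lsG.2 y)).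
  have good1 : Defs.col (op_ns y G) (v, l) v = 1.
    have := colrel_ns y lsG (v, l) v.
    rewrite /sigf /fns /= (negbTE vy) => ->.
    by rewrite bad add0r (bad_col _ lsG nl bad) (lsG.1 y v) /B ay mul1r.
  have ls1 := ls_ns y lsG.
  have st1 : local_step G (op_ns y G) by exists y; right; right.
  have [tc' [cd cl]] := stepA ls1 tc1 vlC nl good1.
  have st : local_step (op_ns y G) (op_ns v (op_ns y G)) by exists v; right; right.
  have cn' : (cnt (sigf (fns (op_ns y G) v) @: C) <= n)%N by rewrite -ltnS (leq_trans cl cn).
  have [H [lsH [eH dH]]] := IH _ _ cn' (ls_ns v ls1) (le_step (le_step eG st1) st) tc'.
  by exists H; rewrite -cd.
rewrite /= in nl bad.
exists G; split => //; split => //; exists v.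
have sub : Nc G v l \subset C.
  apply/subsetP => w; rewrite /Nc !inE => /orP [/eqP -> //| /imsetP [y]].
  rewrite inE => ay ->; move/existsPn: noB => /(_ y); rewrite ay /= negbK //.
by rewrite -(circ_sub tC.1 (Nc_dep lsG nl bad) sub) Nc_card.
Qed.

Theorem corollary1p4 (V : finType) (G : lgraph V) (k : nat) :
  looped_simple G -> (0 < k)%N ->
  ((exists C : {set W V}, transverse_circuit G C /\ #|C| = k) <->
   (exists H : lgraph V, looped_simple H /\ loc_equiv G H /\
      exists v : V, degree H v = k.-1)).
Proof.
move=> lsG k0; split.
  move=> [C [tC <-]].
  exact: (forward lsG (leqnn (cnt C)) lsG (le_refl G) tC).
move=> [H [lsH [eH [v dv]]]].
have [_ iff] := loc_tc lsG eH.
apply/(iff k); exact: backward dv.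
Qed.
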